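(* Let $P$ be a program and $M$ a mode for $P$. If (i) $P$ is linear, (ii) $P$ is safe w.r.t. $M$, (iii) $P$ satisfies $M$, and (iv) the non-unit clauses of $P$ are pairwise mutually exclusive w.r.t. $M$, then $P$ is semideterministic w.r.t. $M$.
   Context: Syntax. Predicate symbols $\mathit{true}$, $=$, $\neq$ are basic, all others non-basic; the set of function symbols is infinite. Basic atoms: $\mathit{true}$, $t_1=t_2$, $t_1\neq t_2$ (disequation); non-basic atoms: $p(t_1,\dots,t_m)$ with $p$ non-basic. A goal is a conjunction of atoms ('','' associative, neutral element $\mathit{true}$); a goal containing only basic atoms is basic. A clause $C$ is $A\leftarrow G$ with non-basic head $hd(C)$ and body $bd(C)$; it is a unit clause iff its body is a basic goal. A program is a set of clauses; it is linear iff every clause has at most one non-basic atom in its body. All mgu's are relevant and idempotent. A variable $X$ is a local variable of goal $G$ in clause $H\leftarrow G_1,G,G_2$ iff $X\in vars(G)-vars(H,G_1,G_2)$. Operational semantics (program $P$): (1) $(t_1=t_2,G)\longmapsto_P G\vartheta$ if $t_1,t_2$ unify with mgu $\vartheta$; (2) $(t_1\neq t_2,G)\longmapsto_P G$ if $t_1,t_2$ are not unifiable; (3) $(A,G)\longmapsto_P(bd(C),G)\vartheta$ if $A$ is non-basic, $C$ is a renamed apart clause of $P$ and $\vartheta$ an mgu of $A$ and $hd(C)$ — a step ''using $C$''. $\longmapsto^*_P$ is the reflexive-transitive closure. For $C\in P$ and a goal $(A_0,G_0)$ with $A_0$ non-basic, $(A_0,G_0)\Rightarrow_C(A_n,G_n)$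 iff there is a derivation $(A_0,G_0)\longmapsto_P\cdots\longmapsto_P(A_n,G_n)$ with $n>0$, whose first step uses $C$, with $A_i$ basic for $i=1,\dots,n-1$, and either $A_n$ non-basic or $(A_n,G_n)$ equal to $\mathit{true}$. $G_0\Rightarrow^*_P G_n$ iff $G_0\Rightarrow_{C_1}\cdots\Rightarrow_{C_n}G_n$ for some clauses $C_1,\dots,C_n$ of $P$ ($n\ge0$). Semideterminism. $P$ is semideterministic for a non-basic atom $A$ iff for each goal $G$ with $A\Rightarrow^*_P G$ there is at most one clause $C$ such that $G\Rightarrow_C G'$ for some goal $G'$ different from $\mathit{true}$. $P$ is semideterministic w.r.t. $M$ iff it is semideterministic for every non-basic atom satisfying $M$. Modes. A mode for non-basic $p$ of arity $h$ is $p(m_1,\dots,m_h)$, $m_i\in\{+,?\}$; $t_i$ is an input argument iff $m_i=+$; variables in input arguments are input variables. A mode for a program contains exactly one mode per non-basic predicate occurring in it. An atom satisfies $M$ iff $M$ has a mode for its predicate and its input arguments are ground. $P$ satisfies $M$ iff for every non-basic $A_0$ satisfying $M$ and every non-basic $A$ and goal $G$ with $A_0\longmapsto^*_P(A,G)$, $A$ satisfies $M$. A clause is safe w.r.t. $M$ iff every variable of every disequation in its body is an input variable of its head or a local variable of that disequation in the clause; a program is safe iff all its clauses are. Satisfiability. A ground basic goal holds iff each of its atoms is $\mathit{true}$, $t=t$, or $t_1\neq t_2$ with $t_1,t_2$ distinct ground terms. For a set $V$ of variables, a conjunction $D$ of disequations is satisfiable w.r.t. $V$ iff there is a ground substitution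 $\sigma$ with domain $V$ such that every ground instance of $D\sigma$ holds. Guard. $grd(C)$ is $bd(C)$ if all atoms of $bd(C)$ are disequations, and otherwise the (possibly empty) conjunction of the disequations of $bd(C)$ to the left of the leftmost atom which is not a disequation. Mutual exclusion. Let $C_1: p(t_1,u_1)\leftarrow G_1$ and $C_2: p(t_2,u_2)\leftarrow G_2$ be renamed apart clauses, where $t_1,t_2$ are the tuples of input arguments of $p$ under $M$ and $u_1,u_2$ the remaining arguments. $C_1,C_2$ are mutually exclusive w.r.t. $M$ iff either $t_1,t_2$ are not unifiable, or they are unifiable via an mgu $\vartheta$ and $(grd(C_1),grd(C_2))\vartheta$ is not satisfiable w.r.t. $vars(t_1,t_2)$ (empty tuples are unifiable via the identity substitution). *)

(* Defs.v *)
From Stdlib Require Import List.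
Import ListNotations.

Inductive term : Type :=
| Var : nat -> term
| Fn  : nat -> list term -> term.

(* Atoms.  The basic predicate [true] is the neutral element of ",", so a
   goal is represented as a list of atoms with [true] normalised away:
   the empty list is the goal [true]. *)
Inductive atom : Type :=
| AEq   : term -> term -> atom
| ANeq  : term -> term -> atom
| APred : nat -> list term -> atom.

Definition goal := list atom.

Definition basic (A : atom) : Prop :=
  match A with APred _ _ => False | _ => True end.
Definition nonbasic (A : atom) : Prop :=
  match A with APred _ _ => True | _ => False end.
Definition basic_goal (G : goal) : Prop := Forall basic G.

Record clause : Type := Clause {
  hd_pred : nat;
  hd_args : list term;
  bd : goal
}.
Definition hd (C : clause) : atom := APred (hd_pred C) (hd_args C).

Definition unit_clause (C : clause) : Prop := basic_goal (bd C).

Definition program := list clause.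

Definition linear (P : program) : Prop :=
  forall C, In C P ->
    length (filter (fun A => match A with APred _ _ => true | _ => false end)
                   (bd C)) <= 1.

Fixpoint tvars (t : term) : list nat :=
  match t with
  | Var x => [x]
  | Fn _ ts => flat_map tvars ts
  end.
Definition tsvars (ts : list term) : list nat := flat_map tvars ts.

Definition avars (A : atom) : list nat :=
  match A with
  | AEq t u | ANeq t u => tvars t ++ tvars u
  | APred _ ts => tsvars ts
  end.
Definition gvars (G : goal) : list nat := flat_map avars G.
Definition cvars (C : clause) : list nat := tsvars (hd_args C) ++ gvars (bd C).

Definition ground (t : term) : Prop := tvars t = [].

Definition subst := nat -> term.

Fixpoint tsubst (s : subst) (t : term) : term :=
  match t with
  | Var x => s x
  | Fn f ts => Fn f (map (tsubst s) ts)
  end.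
Definition asubst (s : subst) (A : atom) : atom :=
  match A with
  | AEq t u => AEq (tsubst s t) (tsubst s u)
  | ANeq t u => ANeq (tsubst s t) (tsubst s u)
  | APred p ts => APred p (map (tsubst s) ts)
  end.
Definition gsubst (s : subst) (G : goal) : goal := map (asubst s) G.

Definition unifier (th : subst) (ts us : list term) : Prop :=
  map (tsubst th) ts = map (tsubst th) us.
Definition unifiable (ts us : list term) : Prop := exists th, unifier th ts us.

(* relevant, idempotent most general unifier of two tuples of terms *)
Definition mgu (th : subst) (ts us : list term) : Prop :=
  unifier th ts us /\
  (forall s, unifier s ts us -> exists d, forall x, s x = tsubst d (th x)) /\
  (forall x, tsubst th (th x) = th x) /\
  (forall x, th x <> Var x ->
     In x (tsvars ts ++ tsvars us) /\
     incl (tvars (th x)) (tsvars ts ++ tsvars us)).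

Definition renaming (r : nat -> nat) : subst := fun x => Var (r x).
Definition rename_clause (r : nat -> nat) (C : clause) : clause :=
  Clause (hd_pred C) (map (tsubst (renaming r)) (hd_args C))
         (gsubst (renaming r) (bd C)).

Definition renamed_apart (C' C : clause) (V : list nat) : Prop :=
  exists r, (forall x y, r x = r y -> x = y) /\
            C' = rename_clause r C /\
            (forall x, In x (cvars C') -> ~ In x V).

Inductive step (P : program) : option clause -> goal -> goal -> Prop :=
| step_eq : forall t1 t2 G th,
    mgu th [t1] [t2] ->
    step P None (AEq t1 t2 :: G) (gsubst th G)
| step_neq : forall t1 t2 G,
    ~ unifiable [t1] [t2] ->
    step P None (ANeq t1 t2 :: G) G
| step_res : forall p ts G C C' th,
    In C P ->
    renamed_apart C' C (gvars (APred p ts :: G)) ->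
    p = hd_pred C' ->
    mgu th ts (hd_args C') ->
    step P (Some C) (APred p ts :: G) (gsubst th (bd C' ++ G)).

Definition step_any (P : program) (G G' : goal) : Prop :=
  exists oc, step P oc G G'.

Inductive steps (P : program) : goal -> goal -> Prop :=
| steps_refl : forall G, steps P G G
| steps_trans : forall G1 G2 G3, step_any P G1 G2 -> steps P G2 G3 -> steps P G1 G3.

Inductive basic_run (P : program) : goal -> goal -> Prop :=
| br_stop_true : basic_run P [] []
| br_stop_nb : forall A G, nonbasic A -> basic_run P (A :: G) (A :: G)
| br_step : forall A G G1 G2,
    basic A -> step_any P (A :: G) G1 -> basic_run P G1 G2 ->
    basic_run P (A :: G) G2.

Definition big_step (P : program) (C : clause) (G G' : goal) : Prop :=
  exists G1, step P (Some C) G G1 /\ basic_run P G1 G'.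

Inductive big_steps (P : program) : goal -> goal -> Prop :=
| bs_refl : forall G, big_steps P G G
| bs_trans : forall C G1 G2 G3,
    In C P -> big_step P C G1 G2 -> big_steps P G2 G3 -> big_steps P G1 G3.

Definition semidet_atom (P : program) (A : atom) : Prop :=
  forall G, big_steps P [A] G ->
  forall C1 C2 G1 G2,
    In C1 P -> In C2 P ->
    big_step P C1 G G1 -> G1 <> [] ->
    big_step P C2 G G2 -> G2 <> [] ->
    C1 = C2.

(* A set of modes: [M p h = Some ms] is the mode of the predicate p/h;
   [true] stands for '+' (input) and [false] for '?'. *)
Definition mode := nat -> nat -> option (list bool).

Definition occurs_pred (P : program) (p h : nat) : Prop :=
  exists C, In C P /\
    ((hd_pred C = p /\ length (hd_args C) = h) \/
     (exists ts, In (APred p ts) (bd C) /\ length ts = h)).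

Definition mode_for (M : mode) (P : program) : Prop :=
  (forall p h ms, M p h = Some ms -> length ms = h) /\
  (forall p h, (exists ms, M p h = Some ms) <-> occurs_pred P p h).

Definition input_args (M : mode) (p : nat) (ts : list term) : list term :=
  match M p (length ts) with
  | Some ms => map snd (filter (fun bt => fst bt) (combine ms ts))
  | None => []
  end.
Definition sat_mode (M : mode) (A : atom) : Prop :=
  match A with
  | APred p ts => (exists ms, M p (length ts) = Some ms) /\
                  Forall ground (input_args M p ts)
  | _ => False
  end.

Definition semidet (P : program) (M : mode) : Prop :=
  forall A, nonbasic A -> sat_mode M A -> semidet_atom P A.

Definition program_satisfies (P : program) (M : mode) : Prop :=
  forall A0, nonbasic A0 -> sat_mode M A0 ->
  forall A G, steps P [A0] (A :: G) -> nonbasic A -> sat_mode M A.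

Definition input_vars_head (M : mode) (C : clause) : list nat :=
  tsvars (input_args M (hd_pred C) (hd_args C)).

Definition safe_clause (M : mode) (C : clause) : Prop :=
  forall G1 t1 t2 G2, bd C = G1 ++ ANeq t1 t2 :: G2 ->
  forall x, In x (avars (ANeq t1 t2)) ->
    In x (input_vars_head M C) \/
    (* local variable of the disequation in C *)
    ~ In x (tsvars (hd_args C) ++ gvars G1 ++ gvars G2).

Definition safe (P : program) (M : mode) : Prop :=
  forall C, In C P -> safe_clause M C.

Definition atom_holds (A : atom) : Prop :=
  match A with
  | AEq t u => t = u
  | ANeq t u => t <> u
  | APred _ _ => False
  end.
Definition goal_holds (G : goal) : Prop := Forall atom_holds G.

Definition ground_subst (r : subst) : Prop := forall x, ground (r x).

Definition disequations (D : goal) : Prop :=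
  Forall (fun A => match A with ANeq _ _ => True | _ => False end) D.

Definition satisfiable_wrt (V : list nat) (D : goal) : Prop :=
  exists s : subst,
    (forall x, In x V -> ground (s x)) /\
    (forall x, ~ In x V -> s x = Var x) /\
    (forall r, ground_subst r -> goal_holds (gsubst r (gsubst s D))).

Definition is_neq (A : atom) : bool :=
  match A with ANeq _ _ => true | _ => false end.

Fixpoint neq_prefix (G : goal) : goal :=
  match G with
  | [] => []
  | A :: G' => if is_neq A then A :: neq_prefix G' else []
  end.

Definition grd (C : clause) : goal :=
  if forallb is_neq (bd C) then bd C else neq_prefix (bd C).

(* C1, C2 (assumed renamed apart, heads with the same predicate) *)
Definition mutually_exclusive (M : mode) (C1 C2 : clause) : Prop :=
  let t1 := input_args M (hd_pred C1) (hd_args C1) in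
  let t2 := input_args M (hd_pred C2) (hd_args C2) in
  ~ unifiable t1 t2 \/
  (exists th, mgu th t1 t2 /\
     ~ satisfiable_wrt (tsvars t1 ++ tsvars t2) (gsubst th (grd C1 ++ grd C2))).

Definition nonunit_pairwise_ME (P : program) (M : mode) : Prop :=
  forall C1 C2, In C1 P -> In C2 P -> C1 <> C2 ->
    ~ unit_clause C1 -> ~ unit_clause C2 ->
    hd_pred C1 = hd_pred C2 -> length (hd_args C1) = length (hd_args C2) ->
    forall C2', renamed_apart C2' C2 (cvars C1) ->
      mutually_exclusive M C1 C2'.

(* Main.v *)
Require Import Defs.
From Stdlib Require Import List Arith Lia Classical.
Import ListNotations.

Fixpoint term_ind2 (Q : term -> Prop) (HV : forall x, Q (Var x))
  (HF : forall f ts, Forall Q ts -> Q (Fn f ts)) (t : term) : Q t :=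
  match t with
  | Var x => HV x
  | Fn f ts => HF f ts ((fix go (l : list term) : Forall Q l :=
      match l with [] => Forall_nil _ | u :: l' => Forall_cons _ (term_ind2 Q HV HF u) (go l') end) ts)
  end.

Lemma tvars_Fn f ts : tvars (Fn f ts) = flat_map tvars ts.
Proof. simpl. induction ts; simpl; congruence. Qed.

Lemma tsubst_ext : forall t s1 s2, (forall x, In x (tvars t) -> s1 x = s2 x) -> tsubst s1 t = tsubst s2 t.
Proof.
  induction t using term_ind2; intros s1 s2 Hs.
  - apply Hs; simpl; auto.
  - rewrite tvars_Fn in Hs. simpl. f_equal. induction H; simpl; [reflexivity|].
    simpl in Hs. f_equal.
    + apply H; intros; apply Hs; apply in_or_app; auto.
    + apply IHForall; intros; apply Hs; apply in_or_app; auto.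
Qed.

Lemma tsubst_comp : forall t s1 s2, tsubst s2 (tsubst s1 t) = tsubst (fun x => tsubst s2 (s1 x)) t.
Proof.
  induction t using term_ind2; intros; simpl; auto.
  f_equal. rewrite map_map. induction H; simpl; auto. f_equal; auto.
Qed.

Lemma tvars_subst : forall t s, tvars (tsubst s t) = flat_map (fun y => tvars (s y)) (tvars t).
Proof.
  induction t using term_ind2; intros.
  - simpl; rewrite app_nil_r; auto.
  - change (tsubst s (Fn f ts)) with (Fn f (map (tsubst s) ts)). rewrite !tvars_Fn. induction H; simpl; auto.
    rewrite flat_map_app. f_equal; auto.
Qed.

Lemma tsubst_id : forall t, tsubst Var t = t.
Proof.
  induction t using term_ind2; simpl; auto. f_equal. induction H; simpl; auto. f_equal; auto.
Qed.

Lemma tvars_ren r t : tvars (tsubst (renaming r) t) = map r (tvars t).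
Proof. rewrite tvars_subst. induction (tvars t); simpl; auto. Qed.

Lemma tsvars_ren r ts : tsvars (map (tsubst (renaming r)) ts) = map r (tsvars ts).
Proof. unfold tsvars. induction ts; simpl; auto. rewrite map_app, tvars_ren. f_equal; auto. Qed.

Lemma gvars_ren r G : gvars (gsubst (renaming r) G) = map r (gvars G).
Proof.
  unfold gvars, gsubst. induction G as [|a G IH]; simpl; auto. rewrite map_app, IH. f_equal.
  destruct a; simpl; rewrite ?map_app, ?tvars_ren; auto. apply tsvars_ren.
Qed.

Lemma cvars_ren r C : cvars (rename_clause r C) = map r (cvars C).
Proof. unfold cvars, rename_clause; simpl. rewrite map_app, tsvars_ren, gvars_ren. auto. Qed.

Lemma ground_var s t y : tvars (tsubst s t) = [] -> In y (tvars t) -> tvars (s y) = [].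
Proof.
  rewrite tvars_subst. intros H Hy. destruct (tvars (s y)) eqn:E; auto.
  assert (In n (flat_map (fun y => tvars (s y)) (tvars t))) by (apply in_flat_map; exists y; rewrite E; simpl; auto).
  rewrite H in H0; destruct H0.
Qed.

Lemma ground_fix s t : tvars t = [] -> tsubst s t = t.
Proof. intros H. rewrite <- (tsubst_id t) at 2. apply tsubst_ext. rewrite H; intros x [] . Qed.

Lemma input_args_map M p f ts : input_args M p (map f ts) = map f (input_args M p ts).
Proof.
  unfold input_args. rewrite length_map. destruct (M p (length ts)) as [ms|]; auto.
  revert ts; induction ms as [|b ms IH]; intros [|t ts]; simpl; auto.
  destruct b; simpl; auto. f_equal; auto.
Qed.

Lemma input_args_in M p ts t : In t (input_args M p ts) -> In t ts.
Proof.
  unfold input_args. destruct (M p (length ts)) as [ms|]; [|intros []].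
  revert ts; induction ms as [|b ms IH]; intros [|u ts]; simpl; try tauto.
  destruct b; simpl; auto. intros [H|H]; auto.
Qed.

Lemma input_vars_in M p ts x : In x (tsvars (input_args M p ts)) -> In x (tsvars ts).
Proof.
  unfold tsvars. rewrite !in_flat_map. intros [t [H1 H2]]. exists t; split; auto.
  eapply input_args_in; eauto.
Qed.

Definition inv (r : nat -> nat) (L : list nat) (y : nat) : nat :=
  match find (fun x => Nat.eqb (r x) y) L with Some x => x | None => 0 end.

Lemma inv_ok r L x : (forall a b, r a = r b -> a = b) -> In x L -> inv r L (r x) = x.
Proof.
  intros Hr Hx. unfold inv. destruct (find (fun z => Nat.eqb (r z) (r x)) L) eqn:E.
  - apply find_some in E. destruct E as [_ E]. apply Nat.eqb_eq in E. auto.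
  - eapply find_none in E; eauto. rewrite Nat.eqb_refl in E. discriminate.
Qed.

Lemma neq_prefix_split G : exists rest, G = neq_prefix G ++ rest.
Proof.
  induction G as [|a G [rest IH]]; simpl. exists []; auto.
  destruct (is_neq a). exists rest; simpl; congruence. exists (a :: G); auto.
Qed.

Lemma grd_split C : exists rest, bd C = grd C ++ rest.
Proof.
  unfold grd. destruct (forallb is_neq (bd C)). exists []; rewrite app_nil_r; auto.
  apply neq_prefix_split.
Qed.

Lemma neq_prefix_neq G A : In A (neq_prefix G) -> is_neq A = true.
Proof.
  induction G; simpl; [tauto|]. destruct (is_neq a) eqn:E; simpl; [|tauto].
  intros [H|H]; subst; auto.
Qed.

Lemma grd_neq C A : In A (grd C) -> is_neq A = true.
Proof.
  unfold grd. destruct (forallb is_neq (bd C)) eqn:E.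
  - intros H. rewrite forallb_forall in E. auto.
  - apply neq_prefix_neq.
Qed.

Lemma is_neq_subst s A : is_neq (asubst s A) = is_neq A.
Proof. destruct A; auto. Qed.

Lemma grd_ren r C : grd (rename_clause r C) = gsubst (renaming r) (grd C).
Proof.
  unfold grd, rename_clause, gsubst; simpl.
  assert (forallb is_neq (map (asubst (renaming r)) (bd C)) = forallb is_neq (bd C)).
  { induction (bd C); simpl; auto. rewrite is_neq_subst; congruence. }
  rewrite H. destruct (forallb is_neq (bd C)); auto.
  clear H. induction (bd C); simpl; auto. rewrite is_neq_subst. destruct (is_neq a); simpl; auto. f_equal; auto.
Qed.

Definition isp (A : atom) : bool := match A with APred _ _ => true | _ => false end.
Definition nbc (G : goal) : nat := length (filter isp G).

Lemma nbc_app G H : nbc (G ++ H) = nbc G + nbc H.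
Proof. unfold nbc. rewrite filter_app, length_app. auto. Qed.

Lemma nbc_subst s G : nbc (gsubst s G) = nbc G.
Proof. unfold nbc, gsubst. induction G as [|a G IH]; simpl; auto. destruct a; simpl; auto. Qed.

Lemma step_nbc P oc G G' : linear P -> step P oc G G' -> nbc G' <= nbc G.
Proof.
  intros Hl Hs. destruct Hs.
  - rewrite nbc_subst. unfold nbc; simpl. lia.
  - unfold nbc; simpl; lia.
  - rewrite nbc_subst, nbc_app. destruct H0 as [r [_ [HC _]]]. subst C'.
    unfold rename_clause; simpl. rewrite nbc_subst. specialize (Hl C H). unfold nbc, isp in *. simpl. lia.
Qed.

Lemma basic_run_nbc0 P G G' : linear P -> basic_run P G G' -> nbc G = 0 -> G' = [].
Proof.
  intros Hl H. induction H; intros Hn; auto.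
  - destruct A; simpl in H; try tauto. unfold nbc in Hn; simpl in Hn; discriminate.
  - destruct H0 as [oc Hs]. apply step_nbc in Hs; auto. apply IHbasic_run. lia.
Qed.

Lemma steps_trans' P G1 G2 G3 : steps P G1 G2 -> steps P G2 G3 -> steps P G1 G3.
Proof. induction 1; auto. intros; econstructor; eauto. Qed.

Lemma basic_run_steps P G G' : basic_run P G G' -> steps P G G'.
Proof. induction 1; try constructor. econstructor; eauto. Qed.

Lemma big_step_steps P C G G' : big_step P C G G' -> steps P G G'.
Proof. intros [G1 [H1 H2]]. econstructor. exists (Some C); eauto. apply basic_run_steps; auto. Qed.

Lemma big_steps_steps P G G' : big_steps P G G' -> steps P G G'.
Proof. induction 1. constructor. eapply steps_trans'; eauto. eapply big_step_steps; eauto. Qed.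

Lemma steps_nbc P G G' : linear P -> steps P G G' -> nbc G' <= nbc G.
Proof. intros Hl. induction 1; auto. destruct H as [oc Hs]. apply step_nbc in Hs; auto. lia. Qed.

Lemma basic_run_neq P N H G' : basic_run P (N ++ H) G' -> (forall A, In A N -> is_neq A = true) ->
  forall u v, In (ANeq u v) N -> ~ unifiable [u] [v].
Proof.
  revert H G'. induction N as [|a N IH]; intros H G' Hb HN u v Hin; [destruct Hin|].
  assert (Ha := HN a (or_introl eq_refl)). destruct a; try discriminate.
  simpl in Hb. inversion Hb as [| ? ? Hnb | ? ? ? ? Hbas Hst Hrun]; subst; [destruct Hnb|]. destruct Hst as [oc Hs]. inversion Hs; subst.
  destruct Hin as [Hin|Hin].
  - injection Hin; intros; subst; auto.
  - eapply IH; eauto. intros; apply HN; simpl; auto.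
Qed.

Lemma inputs_match M p th r ts hs :
  unifier th ts (map (tsubst (renaming r)) hs) -> Forall ground (input_args M p ts) ->
  map (tsubst th) (map (tsubst (renaming r)) (input_args M p hs)) = input_args M p ts.
Proof.
  intros Hu Hg. rewrite <- !input_args_map. unfold unifier in Hu. rewrite <- Hu.
  rewrite input_args_map. rewrite Forall_forall in Hg.
  transitivity (map (fun t => t) (input_args M p ts)); [|apply map_id].
  apply map_ext_in. intros t Ht. apply ground_fix. apply Hg; auto.
Qed.

Lemma input_ground M p th r ts hs x :
  unifier th ts (map (tsubst (renaming r)) hs) -> Forall ground (input_args M p ts) ->
  In x (tsvars (input_args M p hs)) -> tvars (th (r x)) = [].
Proof.
  intros Hu Hg Hx. pose proof (inputs_match M p th r ts hs Hu Hg) as E.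
  unfold tsvars in Hx. apply in_flat_map in Hx. destruct Hx as [t [Ht Hxt]].
  assert (In (tsubst th (tsubst (renaming r) t)) (input_args M p ts)).
  { rewrite <- E. apply in_map. apply in_map. auto. }
  rewrite Forall_forall in Hg. apply Hg in H. unfold ground in H.
  rewrite tsubst_comp in H. apply (ground_var _ _ x H Hxt).
Qed.

Lemma guard_sound P M C r C' p ts G th G' kap s :
  safe_clause M C ->
  (forall a b, r a = r b -> a = b) -> C' = rename_clause r C ->
  (forall x, In x (cvars C') -> ~ In x (gvars (APred p ts :: G))) ->
  mgu th ts (hd_args C') ->
  Forall ground (input_args M p ts) ->
  p = hd_pred C ->
  basic_run P (gsubst th (bd C' ++ G)) G' ->
  (forall x, In x (input_vars_head M C) -> s (kap x) = th (r x)) ->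
  forall u v, In (ANeq u v) (grd C) -> forall rr, ground_subst rr ->
   tsubst rr (tsubst s (tsubst (renaming kap) u)) <> tsubst rr (tsubst s (tsubst (renaming kap) v)).
Proof.
  intros Hsafe Hr HC' Hdis Hmgu Hg Hp Hrun Hs u v Huv rr Hrr Heq.
  destruct (grd_split C) as [rest Hrest].
  set (N := gsubst th (gsubst (renaming r) (grd C))).
  assert (Hb : basic_run P (N ++ gsubst th (gsubst (renaming r) rest ++ G)) G').
  { subst C'. unfold rename_clause in Hrun; simpl in Hrun. rewrite Hrest in Hrun.
    unfold N, gsubst in *. rewrite !map_app in *. rewrite <- app_assoc in Hrun. auto. }
  assert (Hnu : ~ unifiable [tsubst th (tsubst (renaming r) u)] [tsubst th (tsubst (renaming r) v)]).
  { eapply basic_run_neq; [exact Hb| |].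
    - intros A HA. unfold N, gsubst in HA. rewrite map_map, in_map_iff in HA.
      destruct HA as [A0 [<- HA0]]. rewrite !is_neq_subst. eapply grd_neq; eauto.
    - unfold N, gsubst. apply (in_map (fun A => asubst th (asubst (renaming r) A)) _ _ ) in Huv.
      rewrite <- map_map in Huv. exact Huv. }
  apply Hnu.
  exists (fun y => tsubst rr (s (kap (inv r (cvars C) y)))).
  destruct (in_split _ _ Huv) as [A1 [A2 HA]].
  assert (Hbd : bd C = A1 ++ ANeq u v :: (A2 ++ rest)) by (rewrite Hrest, HA, <- app_assoc; auto).
  assert (Key : forall x, In x (avars (ANeq u v)) ->
     tsubst (fun y => tsubst rr (s (kap (inv r (cvars C) y)))) (th (r x)) = tsubst rr (s (kap x))).
  { intros x Hx.
    assert (HxC : In x (cvars C)).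
    { unfold cvars. apply in_or_app. right. unfold gvars. apply in_flat_map. exists (ANeq u v).
      split; auto. rewrite Hbd. apply in_or_app; simpl; auto. }
    destruct (Hsafe _ _ _ _ Hbd x Hx) as [Hin|Hloc].
    - rewrite Hs; auto. subst p.
      assert (Hgr : tvars (th (r x)) = []).
      { eapply input_ground; eauto. destruct Hmgu as [Hu _]. subst C'. exact Hu. }
      rewrite !ground_fix; auto.
    - assert (Hnh : ~ In x (tsvars (hd_args C))) by (intro; apply Hloc; apply in_or_app; auto).
      destruct (classic (th (r x) = Var (r x))) as [E|E].
      + rewrite E. simpl. rewrite inv_ok; auto.
      + exfalso. destruct Hmgu as [_ [_ [_ Hrel]]]. destruct (Hrel _ E) as [Hi _].
        apply in_app_or in Hi. destruct Hi as [Hi|Hi].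
        * apply (Hdis (r x)). subst C'. rewrite cvars_ren. apply in_map; auto.
          simpl. apply in_or_app; auto.
        * subst C'. simpl in Hi. rewrite tsvars_ren in Hi. apply in_map_iff in Hi.
          destruct Hi as [x' [E' Hx']]. apply Hr in E'. subst; auto. }
  unfold unifier. simpl. f_equal.
  rewrite !tsubst_comp in Heq. rewrite !tsubst_comp.
  transitivity (tsubst (fun x => tsubst rr (s (kap x))) u).
  - apply tsubst_ext. intros x Hx. simpl. apply Key. simpl. apply in_or_app; auto.
  - assert (Heq' : tsubst (fun x => tsubst rr (s (kap x))) u = tsubst (fun x => tsubst rr (s (kap x))) v) by exact Heq.
    rewrite Heq'. symmetry. apply tsubst_ext. intros x Hx. simpl. apply Key. simpl. apply in_or_app; auto.
Qed.

Lemma unit_nbc C : unit_clause C -> nbc (bd C) = 0.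
Proof.
  unfold unit_clause, basic_goal, nbc. induction 1; simpl; auto. destruct x; simpl in *; tauto.
Qed.

Lemma ren_id u : tsubst (renaming (fun x => x)) u = u.
Proof. apply tsubst_id. Qed.

Lemma ground_of_map s L M p ts y :
  map (tsubst s) L = input_args M p ts -> Forall ground (input_args M p ts) ->
  In y (tsvars L) -> tvars (s y) = [].
Proof.
  intros E Hg Hy. unfold tsvars in Hy. apply in_flat_map in Hy. destruct Hy as [t [Ht Hyt]].
  rewrite Forall_forall in Hg. assert (G : ground (tsubst s t)) by (apply Hg; rewrite <- E; apply in_map; auto).
  eapply ground_var; eauto.
Qed.

Theorem proposition2 (P : program) (M : mode) :
  mode_for M P ->
  linear P ->
  safe P M ->
  program_satisfies P M ->
  nonunit_pairwise_ME P M ->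
  semidet P M.
Proof.
  intros _ Hlin Hsafe Hsat HME A HA HAm G HG C1 C2 G1 G2 HC1 HC2 [H1 [Hs1 Hr1]] HG1 [H2 [Hs2 Hr2]] HG2.
  inversion Hs1 as [| | p ts R C0 D1 th1 HC0 Hren1 Hp1 Hmgu1]; subst.
  inversion Hs2 as [| | p' ts' R' C0' D2 th2 HC0' Hren2 Hp2 Hmgu2]; subst.
  clear Hs1 Hs2 HC0 HC0'.
  destruct Hren1 as [r1 [Hinj1 [HD1 Hdis1]]]. destruct Hren2 as [r2 [Hinj2 [HD2 Hdis2]]].
  subst D1 D2. simpl in Hp2.
  assert (Hst := big_steps_steps _ _ _ HG).
  assert (Hm : sat_mode M (APred (hd_pred C1) ts)).
  { eapply Hsat; eauto. simpl. auto. }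
  destruct Hm as [_ Hgr].
  assert (HnR : nbc R = 0).
  { apply steps_nbc in Hst; auto. destruct A; simpl in HA; try tauto. unfold nbc in *; simpl in *. lia. }
  assert (Hnu1 : ~ unit_clause C1).
  { intro Hu. apply HG1. eapply basic_run_nbc0; eauto. rewrite nbc_subst, nbc_app, HnR.
    unfold rename_clause; simpl. rewrite nbc_subst, unit_nbc; auto. }
  assert (Hnu2 : ~ unit_clause C2).
  { intro Hu. apply HG2. eapply basic_run_nbc0; eauto. rewrite nbc_subst, nbc_app, HnR.
    unfold rename_clause; simpl. rewrite nbc_subst, unit_nbc; auto. }
  apply NNPP. intro Hne.
  assert (Hlen : forall r th C, mgu th ts (hd_args (rename_clause r C)) -> length (hd_args C) = length ts).
  { intros r th C [Hu _]. unfold unifier in Hu. apply (f_equal (@length _)) in Hu.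
    rewrite !length_map in Hu. simpl in Hu. rewrite length_map in Hu. auto. }
  set (N := S (list_max (cvars C1))).
  set (rho := fun x => x + N).
  set (C2' := rename_clause rho C2).
  assert (HmaxC1 : forall x, In x (cvars C1) -> x < N).
  { intros x Hx. assert (Hf := proj1 (list_max_le (cvars C1) (list_max (cvars C1))) (le_n _)).
    rewrite Forall_forall in Hf. apply Hf in Hx. unfold N. lia. }
  assert (Hinjr : forall a b, rho a = rho b -> a = b) by (unfold rho; intros; lia).
  assert (Hdisr : forall x, In x (cvars C2) -> ~ In (rho x) (cvars C1)).
  { intros x _ Hx. apply HmaxC1 in Hx. unfold rho in Hx. lia. }
  assert (Hren' : renamed_apart C2' C2 (cvars C1)).
  { exists rho. split; auto. split; auto. intros y Hy. unfold C2' in Hy. rewrite cvars_ren in Hy.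
    apply in_map_iff in Hy. destruct Hy as [x [<- Hx]]. apply Hdisr; auto. }
  assert (Hpred : hd_pred C1 = hd_pred C2) by auto.
  assert (HME' := HME C1 C2 HC1 HC2 Hne Hnu1 Hnu2 Hpred
                   (eq_trans (Hlen _ _ _ Hmgu1) (eq_sym (Hlen _ _ _ Hmgu2))) C2' Hren').
  unfold mutually_exclusive in HME'.
  set (p := hd_pred C1) in *.
  replace (hd_pred C2') with p in HME' by (unfold C2'; simpl; auto).
  rewrite <- Hpred in *. fold p in Hpred.
  set (t1 := input_args M p (hd_args C1)) in *.
  set (t2 := input_args M p (hd_args C2')) in *.
  set (sigma := fun y => if in_dec Nat.eq_dec y (cvars C1) then th1 (r1 y)
                         else th2 (r2 (inv rho (cvars C2) y))).
  assert (Hs1 : forall x, In x (cvars C1) -> sigma x = th1 (r1 x)).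
  { intros x Hx. unfold sigma. destruct (in_dec Nat.eq_dec x (cvars C1)); tauto. }
  assert (Hs2 : forall x, In x (cvars C2) -> sigma (rho x) = th2 (r2 x)).
  { intros x Hx. unfold sigma. destruct (in_dec Nat.eq_dec (rho x) (cvars C1)).
    - exfalso; eapply Hdisr; eauto.
    - rewrite inv_ok; auto. }

  assert (Hvt1 : forall x, In x (tsvars t1) -> In x (cvars C1)).
  { intros x Hx. apply input_vars_in in Hx. unfold cvars. apply in_or_app; auto. }
  assert (Ht2 : t2 = map (tsubst (renaming rho)) (input_args M p (hd_args C2))).
  { unfold t2, C2', rename_clause; simpl. apply input_args_map. }
  assert (Hvt2 : forall x, In x (tsvars (input_args M p (hd_args C2))) -> In x (cvars C2)).
  { intros x Hx. apply input_vars_in in Hx. unfold cvars. apply in_or_app; auto. }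
  assert (Hst1 : map (tsubst sigma) t1 = input_args M p ts).
  { transitivity (map (tsubst th1) (map (tsubst (renaming r1)) t1)).
    - rewrite map_map. apply map_ext_in. intros t Ht. rewrite tsubst_comp. apply tsubst_ext.
      intros x Hx. simpl. apply Hs1. apply Hvt1. unfold tsvars; apply in_flat_map; eauto.
    - apply inputs_match; auto. exact (proj1 Hmgu1). }
  assert (Hst2 : map (tsubst sigma) t2 = input_args M p ts).
  { rewrite Ht2. transitivity (map (tsubst th2) (map (tsubst (renaming r2)) (input_args M p (hd_args C2)))).
    - rewrite !map_map. apply map_ext_in. intros t Ht. rewrite !tsubst_comp. apply tsubst_ext.
      intros x Hx. simpl. apply Hs2. apply Hvt2. unfold tsvars; apply in_flat_map; eauto.
    - apply inputs_match; auto. exact (proj1 Hmgu2). }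
  destruct HME' as [Hnu | [th [Hmg Hns]]].
  { apply Hnu. exists sigma. unfold unifier. congruence. }
  apply Hns.
  set (V := tsvars t1 ++ tsvars t2).
  destruct Hmg as [Hu [Hgen [Hidem Hrel]]].
  assert (Hsu : unifier sigma t1 t2) by (unfold unifier; congruence).
  destruct (Hgen sigma Hsu) as [d Hd].
  set (s := fun y => if in_dec Nat.eq_dec y V then sigma y else Var y).
  assert (HsV : forall y, In y V -> s y = sigma y) by (intros y Hy; unfold s; destruct in_dec; tauto).
  assert (HsnV : forall y, ~ In y V -> s y = Var y) by (intros y Hy; unfold s; destruct in_dec; tauto).
  assert (HgV : forall y, In y V -> ground (sigma y)).
  { intros y Hy. unfold ground. apply in_app_or in Hy. destruct Hy; [eapply ground_of_map with (L:=t1) | eapply ground_of_map with (L:=t2)]; eauto. }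
  assert (Hsth : forall x, tsubst s (th x) = s x).
  { intros x. destruct (in_dec Nat.eq_dec x V) as [Hx|Hx].
    - assert (Hinc : forall y, In y (tvars (th x)) -> In y V).
      { destruct (classic (th x = Var x)) as [E|E].
        - rewrite E; simpl; intros y [<-|[]]; auto.
        - apply (proj2 (Hrel x E)). }
      rewrite (HsV x Hx). transitivity (tsubst sigma (th x)).
      + apply tsubst_ext. intros; apply HsV; auto.
      + transitivity (tsubst (fun y => tsubst d (th y)) (th x)).
        * apply tsubst_ext; intros; apply Hd.
        * rewrite <- tsubst_comp, Hidem. symmetry; apply Hd.
    - assert (E : th x = Var x). { apply NNPP; intro E. apply Hx. apply (proj1 (Hrel x E)). }
      rewrite E. reflexivity. }
  assert (Hu' : forall w, tsubst s (tsubst th w) = tsubst s w).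
  { intros; rewrite tsubst_comp; apply tsubst_ext; intros; apply Hsth. }
  exists s. split; [|split].
  - intros y Hy. rewrite HsV by auto. apply HgV; auto.
  - exact HsnV.
  - intros rr Hrr. unfold goal_holds. apply Forall_forall. intros B HB.
    unfold gsubst in HB. rewrite !map_map, in_map_iff in HB. destruct HB as [B0 [<- HB0]].
    assert (Hneq : is_neq B0 = true).
    { apply in_app_or in HB0; destruct HB0; eapply grd_neq; eauto. }
    destruct B0 as [| u v |]; try discriminate. simpl. rewrite !Hu'.
    apply in_app_or in HB0. destruct HB0 as [HB0|HB0].
    + rewrite <- (ren_id u), <- (ren_id v).
      eapply (guard_sound P M C1 r1 _ p ts R th1 G1 (fun x => x) s); eauto.
      intros x Hx. rewrite HsV. apply Hs1. apply Hvt1. exact Hx. apply in_or_app. left. exact Hx.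
    + unfold C2' in HB0. rewrite grd_ren in HB0. unfold gsubst in HB0. apply in_map_iff in HB0.
      destruct HB0 as [B1 [EB HB1]]. destruct B1; try discriminate. simpl in EB.
      injection EB; intros; subst.
      eapply (guard_sound P M C2 r2 _ p ts R th2 G2 rho s); eauto.
      intros x Hx. unfold input_vars_head in Hx; rewrite <- Hpred in Hx. rewrite HsV. apply Hs2. apply Hvt2. exact Hx. apply in_or_app. right.
      rewrite Ht2, tsvars_ren. apply in_map. exact Hx.
Qed.
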